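(* In the two-tier residency matching game described in the context with list length $K=1$ and $v\ge e/(e-1)$, under the large market approximation, the social welfare of the (symmetric) Nash equilibrium is at least a $\frac{e}{2(e-1)}$ fraction (note $\frac{e}{2(e-1)}>0.79$) of the social welfare of SIMPLE.
   Context: Model: there are $n$ high-tier and $rn$ low-tier doctors ($r>0$), and $n$ high-tier and $rn$ low-tier hospitals, each with one position. Every hospital prefers every high doctor to every low doctor and every doctor prefers every high hospital to every low hospital; within a tier, preferences are independent uniformly random permutations. Each doctor submits a ranked list of exactly $K$ hospitals (his top choices within the tiers he chooses); hospitals submit full true rankings; doctor-proposing deferred acceptance is run. Values: a doctor gets $v>1$ if matched to a high hospital, $1$ if matched to a low one, $0$ if unmatched; a hospital gets $v$ if matched to a high doctor, $1$ if matched to a low doctor, $0$ if unfilled. Social welfare is the sum of the values of all doctors and hospitals. Large market approximation: $n\to\infty$ with $r,K,v$ fixed, and each application to a hospital is accepted independently with a probability determined by the aggregate strategy profile through fixed-point equations (expected matched doctors = expected hospitals receiving at least one admissible application; a hospital receiving on average $\lambda$ applications gets none with probability $e^{-\lambda}$; low doctors' applications to hospitals already taken by high doctors are rejected). Equilibrium: symmetric Nash equilibrium, all doctors of a tier using the same (possibly mixed) strategy, each maximizing expected value given the acceptance probabilities. SIMPLE: the outcome when every doctor submits a single application ($K=1$) to his most preferred hospital in his own tier; its welfare in the large market limit is $2(v+r)n(1-1/e)$. *)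

(* Defs.v *)
From Stdlib Require Import Reals.
Open Scope R_scope.

(* Large-market model, list length K = 1.
   All masses are normalized by n (number of high doctors = number of high
   hospitals); there are r*n low doctors and r*n low hospitals.

   With K = 1, a (mixed) symmetric strategy of a tier is the probability of
   sending the single application to the top HIGH hospital (otherwise the
   application goes to the top LOW hospital).  p = high doctors' probability,
   q = low doctors' probability. *)

(* Acceptance ratio: if the applications to a set of hospitals arrive at
   Poisson rate lam per hospital, the fraction of hospitals receiving at
   least one is 1 - e^{-lam}; equating matched doctors with such hospitals,
   each application is accepted with probability (1 - e^{-lam})/lam
   (limit value 1 when lam = 0). *)
Definition acc (lam : R) : R :=
  if Req_EM_T lam 0 then 1 else (1 - exp (- lam)) / lam.

(* High hospitals: high-doctor application rate p per hospital.
   Low doctors' applications to high hospitals (rate r*q per hospital) are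
   admissible only at high hospitals receiving no high application
   (probability e^{-p}).
   Low hospitals (r*n of them): high-doctor rate (1-p)/r, low-doctor rate
   1-q, the latter admissible only where there is no high applicant. *)
Definition aHH (r p q : R) : R := acc p.
Definition aLH (r p q : R) : R := exp (- p) * acc (r * q).
Definition aHL (r p q : R) : R := acc ((1 - p) / r).
Definition aLL (r p q : R) : R := exp (- ((1 - p) / r)) * acc (1 - q).

Definition payoff_high (v r p q : R) (x : R) : R :=
  x * (v * aHH r p q) + (1 - x) * aHL r p q.
Definition payoff_low (v r p q : R) (x : R) : R :=
  x * (v * aLH r p q) + (1 - x) * aLL r p q.

Definition is_equilibrium (v r p q : R) : Prop :=
  0 <= p <= 1 /\ 0 <= q <= 1 /\
  (forall x, 0 <= x <= 1 -> payoff_high v r p q x <= payoff_high v r p q p) /\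
  (forall y, 0 <= y <= 1 -> payoff_low v r p q y <= payoff_low v r p q q).

(* Masses (per n) of matched pairs: doctor tier / hospital tier. *)
Definition mHH (r p q : R) : R := p * aHH r p q.
Definition mHL (r p q : R) : R := (1 - p) * aHL r p q.
Definition mLH (r p q : R) : R := r * q * aLH r p q.
Definition mLL (r p q : R) : R := r * (1 - q) * aLL r p q.

Definition welfare (v r p q : R) : R :=
  (* doctors *)
  (v * (mHH r p q + mLH r p q) + (mHL r p q + mLL r p q)) +
  (* hospitals *)
  (v * (mHH r p q + mHL r p q) + (mLH r p q + mLL r p q)).

Definition welfare_simple (v r : R) : R := 2 * (v + r) * (1 - 1 / exp 1).

(* Main.v *)
Require Import Defs.
From Stdlib Require Import Reals Lra.
Open Scope R_scope.

Lemma acc_ne x : x <> 0 -> acc x = (1 - exp (- x)) / x.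
Proof. intro H; unfold acc; destruct (Req_EM_T x 0); [contradiction|reflexivity]. Qed.

Lemma acc_0 : acc 0 = 1.
Proof. unfold acc; destruct (Req_EM_T 0 0); [reflexivity|contradiction]. Qed.

Lemma expm_lt x : x <> 0 -> 1 - x < exp (- x).
Proof. intro H. pose proof (exp_ineq1 (-x)). lra. Qed.

Lemma dexpm c : derivable_pt_lim (fun x => exp (- x)) c (- exp (- c)).
Proof.
  assert (H1 : derivable_pt_lim (fun x => - x) c (-1)).
  { replace (-1) with (- 1) by ring.
    change (fun x => - x) with (- id)%F.
    apply derivable_pt_lim_opp. apply derivable_pt_lim_id. }
  pose proof (derivable_pt_lim_comp (fun x => - x) exp c (-1) (exp (- c)) H1
     (derivable_pt_lim_exp _)) as H.
  replace (- exp (- c)) with (exp (- c) * -1) by ring. exact H.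
Qed.

Lemma chord p : 0 < p < 1 -> (1 - exp (-1)) * p <= 1 - exp (- p).
Proof.
  intros [H0 H1].
  destruct (Rle_or_lt ((1 - exp (-1)) * p) (1 - exp (- p))) as [h|h]; [exact h|].
  exfalso.
  destruct (MVT_cor2 (fun x => exp (- x)) (fun x => - exp (- x)) 0 p H0
    (fun c _ => dexpm c)) as [c1 [E1 [C1 C1']]].
  destruct (MVT_cor2 (fun x => exp (- x)) (fun x => - exp (- x)) p 1 H1
    (fun c _ => dexpm c)) as [c2 [E2 [C2 C2']]].
  cbv beta in E1, E2. rewrite Ropp_0, exp_0 in E1.
  replace (- (1)) with (-1) in E2 by ring.
  assert (A1 : exp (- c1) < 1 - exp (-1)).
  { assert (exp (- c1) * p < (1 - exp (-1)) * p) by lra.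
    apply Rmult_lt_reg_r with p; lra. }
  assert (A2 : 1 - exp (-1) < exp (- c2)).
  { assert ((1 - exp (-1)) * (1 - p) < exp (- c2) * (1 - p)) by (rewrite Rmult_minus_distr_l, Rmult_1_r; lra).
    apply Rmult_lt_reg_r with (1 - p); lra. }
  assert (exp (- c2) < exp (- c1)) by (apply exp_increasing; lra).
  lra.
Qed.

Lemma acc_ge p : 0 <= p <= 1 -> 1 - exp (-1) <= acc p.
Proof.
  intros [H0 H1].
  destruct (Req_dec p 0) as [->|Hp].
  { rewrite acc_0. pose proof (exp_pos (-1)). lra. }
  rewrite acc_ne by exact Hp.
  destruct (Req_dec p 1) as [->|Hp1].
  { unfold Rdiv. rewrite Rinv_1. replace (- (1)) with (-1) by ring. lra. }
  pose proof (chord p ltac:(lra)).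
  apply Rmult_le_reg_r with p; [lra|].
  unfold Rdiv. rewrite Rmult_assoc, Rinv_l by exact Hp. lra.
Qed.

Lemma acc_lt1 x : 0 < x -> acc x < 1.
Proof.
  intro H. rewrite acc_ne by lra.
  pose proof (expm_lt x ltac:(lra)).
  apply Rmult_lt_reg_r with x; [lra|].
  unfold Rdiv. rewrite Rmult_assoc, Rinv_l by lra. lra.
Qed.

Lemma acc_nn x : 0 <= x -> 0 <= acc x.
Proof.
  intro H. destruct (Req_dec x 0) as [->|Hx]. { rewrite acc_0; lra. }
  rewrite acc_ne by exact Hx.
  assert (exp (- x) < exp 0) by (apply exp_increasing; lra).
  rewrite exp_0 in H0.
  apply Rmult_le_pos; [lra|]. apply Rlt_le, Rinv_0_lt_compat; lra.
Qed.

Lemma acc_s s : 0 <= s <= 1 -> 1 <= acc s * (1 + s).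
Proof.
  intros [H0 H1].
  destruct (Req_dec s 0) as [->|Hs]. { rewrite acc_0; lra. }
  rewrite acc_ne by exact Hs.
  pose proof (exp_ineq1_le s) as E. rewrite exp_Ropp.
  pose proof (exp_pos s) as P.
  assert (K : (1 + s) / exp s <= 1).
  { apply Rmult_le_reg_r with (exp s); [lra|]. unfold Rdiv.
    rewrite Rmult_assoc, Rinv_l by lra. lra. }
  assert (K2 : s <= (1 - / exp s) * (1 + s)).
  { unfold Rdiv in K. nra. }
  unfold Rdiv. replace ((1 - / exp s) * / s * (1 + s)) with (((1 - / exp s) * (1 + s)) * / s) by ring.
  apply Rmult_le_reg_r with s; [lra|].
  rewrite Rmult_assoc, Rinv_l by exact Hs. lra.
Qed.

Theorem proposition2 (v r p q : R) :
  1 < v -> 0 < r -> exp 1 / (exp 1 - 1) <= v ->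
  is_equilibrium v r p q ->
  exp 1 / (2 * (exp 1 - 1)) * welfare_simple v r <= welfare v r p q.
Proof.
  intros Hv Hr Hve [Hp [Hq [HH HL]]].
  pose proof (exp_ineq1 1 ltac:(lra)) as E2.
  assert (Em : exp (-1) = / exp 1) by apply exp_Ropp.
  set (E := exp 1) in *.
  assert (HvE : 1 <= v * (1 - exp (-1))).
  { rewrite Em. apply Rmult_le_reg_r with E; [lra|].
    replace (v * (1 - / E) * E) with (v * (E - 1)) by (field; lra).
    apply Rmult_le_reg_r with (/ (E - 1)).
    { apply Rinv_0_lt_compat; lra. }
    replace (v * (E - 1) * / (E - 1)) with v by (field; lra). unfold Rdiv in Hve. lra. }
  assert (p1 : p = 1).
  { destruct (Req_dec p 1) as [|hp]; [assumption|exfalso].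
    specialize (HH 1 ltac:(lra)). unfold payoff_high, aHH, aHL in HH.
    assert (h1 : (1 - p) * (v * acc p) <= (1 - p) * acc ((1 - p) / r)) by lra.
    assert (h2 : v * acc p <= acc ((1 - p) / r)) by (apply Rmult_le_reg_l with (1 - p); lra).
    assert (h3 : acc ((1 - p) / r) < 1).
    { apply acc_lt1. apply Rdiv_lt_0_compat; lra. }
    pose proof (acc_ge p Hp). nra. }
  subst p.
  assert (LHS : E / (2 * (E - 1)) * welfare_simple v r = v + r).
  { unfold welfare_simple. fold E. field. lra. }
  rewrite LHS.
  unfold welfare, mHH, mHL, mLH, mLL, aHH, aHL, aLH, aLL.
  replace (- ((1 - 1) / r)) with 0 by (field; lra). rewrite exp_0.
  rewrite (acc_ne 1) by lra.
  set (a := acc (1 - q)). set (b := acc (r * q)).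
  assert (Hb : 0 <= b) by (apply acc_nn; nra).
  assert (Ha : 1 <= a * (1 + (1 - q))) by (apply acc_s; lra).
  assert (Key : r * q * a <= (v + 1) * (r * q * (exp (-1) * b))).
  { destruct (Req_dec q 0) as [->|hq].
    { lra. }
    specialize (HL 0 ltac:(lra)). unfold payoff_low, aLH, aLL in HL.
    replace (- ((1 - 1) / r)) with 0 in HL by (field; lra). rewrite exp_0 in HL.
    fold a b in HL. replace (- (1)) with (-1) in HL by ring.
    assert (q * a <= q * (v * (exp (-1) * b))) by lra.
    assert (a <= v * (exp (-1) * b)) by (apply Rmult_le_reg_l with q; lra).
    pose proof (exp_pos (-1)).
    assert (0 <= r * q) by nra.
    assert (r * q * a <= r * q * (v * (exp (-1) * b))) by (apply Rmult_le_compat_l; lra).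
    assert (0 <= r * q * (exp (-1) * b)) by (apply Rmult_le_pos; [lra| apply Rmult_le_pos; lra]).
    nra. }
  assert (HE : 1 - exp (-1) >= 1/2).
  { rewrite Em. apply Rle_ge. apply Rmult_le_reg_r with E; [lra|].
    replace ((1 - / E) * E) with (E - 1) by (field; lra). lra. }
  unfold Rdiv. rewrite Rinv_1. replace (- (1)) with (-1) by ring. nra.
Qed.
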